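(* Let $p$ be a prime, let $n\geqslant 2$ be an integer, let $m\geqslant 0$ be an integer and let $k\geqslant 2$ be an integer not divisible by $p$. For positive integers $a,r$ let $w(a,r)=\frac{1}{r}\sum_{d\mid r}\mu(d)\,a^{r/d}$, where $\mu$ is the Möbius function. For $i=0,1,\dots,m$ define $$a_i = \frac{w(n,p^{m-i}k)^{p^i}}{p^i\, w(n,p^mk)}.$$ Suppose that $0 < s \leqslant i \leqslant m$. Then $$\frac{a_i}{a_{i-s}} \leqslant p^{-s}\left(\frac{2p^s}{(p^{m-i}k)^{p^s-1}}\right)^{p^{i-s}}.$$ *)

(* Defs.v *)
From mathcomp Require Import all_boot all_order all_algebra.
Set Implicit Arguments. Unset Strict Implicit. Unset Printing Implicit Defensive.
Import Order.TTheory GRing.Theory Num.Theory.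
Local Open Scope ring_scope.

Definition moebius (d : nat) : int :=
  if d == 0%N then 0
  else if all (fun q => logn q d == 1%N) (primes d)
       then (-1) ^+ size (primes d) else 0.

Definition necklace_w (R : realFieldType) (a r : nat) : R :=
  (r%:R)^-1 * \sum_(d <- divisors r) (moebius d)%:~R * ((a ^ (r %/ d))%:R).

Definition coef_a (R : realFieldType) (p n m k i : nat) : R :=
  (necklace_w R n (p ^ (m - i) * k)) ^+ (p ^ i)
  / ((p ^ i)%:R * necklace_w R n (p ^ m * k)).

(* Main.v *)
Require Import Defs.
From mathcomp Require Import all_boot all_order all_algebra.
From mathcomp Require Import zify ring lra.
Import Order.TTheory GRing.Theory Num.Theory.

Lemma mu_cases d : moebius d = 0%R \/ moebius d = 1%R \/ moebius d = (-1)%R.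
Proof.
rewrite /moebius; case: ifP => _; first by left.
case: ifP => _; last by left.
rewrite -signr_odd; case: odd; rewrite ?expr1 ?expr0; auto.
Qed.

Lemma mu1 : moebius 1 = 1%R.
Proof. by []. Qed.

Lemma mu_prime q : prime q -> moebius q = (-1)%R.
Proof.
move=> pq; rewrite /moebius primes_prime //= logn_prime // eqxx /=.
by case: q pq => // q _; rewrite expr1.
Qed.

Lemma geom_lt (n t : nat) : (2 <= n)%N -> (\sum_(j < t) n ^ j < n ^ t)%N.
Proof.
move=> n2; elim: t => [|t IH]; first by rewrite big_ord0.
rewrite big_ord_recr /= expnS.
have h : (n ^ t + n ^ t <= n * n ^ t)%N by rewrite addnn -mul2n leq_mul2r n2 orbT.
by apply: leq_trans h; rewrite ltn_add2r.
Qed.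

Lemma sum_sub_uniq (s : seq nat) (B : nat) (F : nat -> nat) :
  uniq s -> (forall j, j \in s -> j < B)%N ->
  (\sum_(j <- s) F j <= \sum_(j < B) F j)%N.
Proof.
move=> us sB.
rewrite -(big_mkord xpredT) [X in (_ <= X)%N](bigID (fun j => j \in s)) /=.
rewrite -[X in (X <= _)%N]addn0; apply: leq_add => //; apply: eq_leq.
rewrite -[RHS]big_filter; apply: perm_big; apply: uniq_perm => //.
  by rewrite filter_uniq // iota_uniq.
move=> x; rewrite mem_filter mem_iota add0n.
case xs: (x \in s) => //=.
by rewrite subn0 (sB _ xs).
Qed.

Lemma sum_div_bound (N n B : nat) (P : pred nat) :
  (0 < N)%N -> (forall d, d %| N -> P d -> N %/ d < B)%N ->
  (\sum_(d <- divisors N | P d) n ^ (N %/ d) <= \sum_(j < B) n ^ j)%N.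
Proof.
move=> N0 hB.
rewrite -big_filter -(big_map (fun d => (N %/ d)%N) xpredT (fun j => (n ^ j)%N)).
apply: sum_sub_uniq.
  rewrite map_inj_in_uniq ?filter_uniq ?divisors_uniq //.
  move=> x y; rewrite !mem_filter => /andP[_ xd] /andP[_ yd] e.
  rewrite -dvdn_divisors // in xd; rewrite -dvdn_divisors // in yd.
  have hx := divnK xd; have hy := divnK yd; rewrite e in hx.
  move: hx hy; case: (N %/ y) => [|c]; first by rewrite mul0n => h; rewrite -h in N0.
  by move=> hx hy; apply/eqP; rewrite -(eqn_pmul2l (ltn0Sn c)) hx hy.
move=> j /mapP[d]; rewrite mem_filter => /andP[Pd dd] ->.
by apply: hB => //; rewrite dvdn_divisors.
Qed.

Local Open Scope ring_scope.

Definition Tsum (R : realFieldType) (n N : nat) : R :=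
  \sum_(d <- divisors N) (moebius d)%:~R * ((n ^ (N %/ d))%:R).

Lemma rest_le (R : realFieldType) (s : seq nat) (P : pred nat) (x : nat -> nat) :
  \sum_(d <- s | P d) (moebius d)%:~R * ((x d)%:R : R) <= (\sum_(d <- s | P d) x d)%N%:R.
Proof.
rewrite natr_sum; apply: ler_sum => d _.
by case: (mu_cases d) => [->|[->|->]]; rewrite ?mul0r ?mul1r ?mulN1r ?ler0n //;
  rewrite (le_trans (y := 0)) // ?oppr_le0 ?ler0n.
Qed.

Lemma rest_ge (R : realFieldType) (s : seq nat) (P : pred nat) (x : nat -> nat) :
  - ((\sum_(d <- s | P d) x d)%N%:R) <= \sum_(d <- s | P d) (moebius d)%:~R * ((x d)%:R : R).
Proof.
rewrite natr_sum -sumrN; apply: ler_sum => d _.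
by case: (mu_cases d) => [->|[->|->]]; rewrite ?mul0r ?mul1r ?mulN1r ?ler0n //;
  rewrite (le_trans (y := 0)) // ?oppr_le0 ?ler0n.
Qed.

Lemma T_split (R : realFieldType) n N : (0 < N)%N ->
  Tsum R n N = (n ^ N)%:R + \sum_(d <- divisors N | d != 1%N) (moebius d)%:~R * ((n ^ (N %/ d))%:R).
Proof.
move=> N0; rewrite /Tsum (bigD1_seq 1%N) ?divisors_uniq -?dvdn_divisors ?dvd1n //.
by rewrite mu1 divn1 mul1r.
Qed.

Lemma T_lower (R : realFieldType) n N : (0 < N)%N ->
  (n ^ N)%:R - (\sum_(j < N./2.+1) n ^ j)%N%:R <= Tsum R n N.
Proof.
move=> N0; rewrite T_split // lerD2l.
apply: le_trans (rest_ge _ _ _ _); rewrite lerN2 ler_nat.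
apply: sum_div_bound => // d dN d1.
rewrite ltnS -divn2 leq_div2l //.
case: d dN d1 => [|[|d]] //; rewrite dvd0n => /eqP N00; by rewrite N00 in N0.
Qed.

Lemma T_upper (R : realFieldType) n N : (2 <= n)%N -> (2 <= N)%N ->
  Tsum R n N <= (n ^ N)%:R.
Proof.
move=> n2 N2; have N0 : (0 < N)%N by apply: leq_trans N2.
set q := pdiv N.
have pq : prime q by apply: pdiv_prime.
have qN : (q %| N)%N by apply: pdiv_dvd.
rewrite T_split // -[X in _ <= X]addr0 lerD2l -big_filter.
rewrite (bigD1_seq q) ?filter_uniq ?divisors_uniq //; last first.
  rewrite mem_filter -dvdn_divisors // qN andbT; apply/eqP => q1; by rewrite q1 in pq.
rewrite big_filter_cond mu_prime // /= (_ : (-1)%:~R = -1 :> R) ?mulN1r; last by rewrite rmorphN1.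
rewrite addrC subr_le0.
apply: le_trans (rest_le _ _ _ _) _; rewrite ler_nat.
apply: (leq_trans _ (ltnW (geom_lt n (N %/ q)%N n2))).
apply: sum_div_bound => // d dN /andP[d1 dq].
have d0 : (0 < d)%N by case: d dN d1 dq => // /[!dvd0n] /eqP N00; rewrite N00 in N0.
have qd : (q < d)%N.
  rewrite ltn_neqAle eq_sym dq /= /q pdiv_min_dvd //.
  by case: d d0 d1 {dN dq} => [|[|]].
rewrite ltnNge; apply/negP => h.
have a0 : (0 < N %/ d)%N by rewrite divn_gt0 // dvdn_leq.
have : (N %/ q * q < N %/ d * d)%N.
  apply: leq_ltn_trans (leq_mul h (leqnn q)) _.
  by rewrite ltn_pmul2l.
by rewrite !divnK // ltnn.
Qed.

Lemma T_pos (R : realFieldType) n N : (2 <= n)%N -> (2 <= N)%N -> 0 < Tsum R n N.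
Proof.
move=> n2 N2; have N0 : (0 < N)%N by apply: leq_trans N2.
have H := T_lower R n N N0. apply: lt_le_trans H. rewrite subr_gt0 ltr_nat.
apply: (leq_trans (geom_lt n _ n2)); apply: leq_pexp2l; first by apply: leq_trans n2.
by rewrite -divn2 ltn_Pdiv.
Qed.

Lemma T_lower4 (R : realFieldType) n N : (2 <= n)%N -> (4 <= N)%N ->
  (n ^ N)%:R <= 2 * Tsum R n N.
Proof.
move=> n2 N4; have N0 : (0 < N)%N by apply: leq_trans N4.
have h : (2 * \sum_(j < N./2.+1) n ^ j <= n ^ N)%N.
  apply: (leq_trans (leq_mul n2 (ltnW (geom_lt n _ n2)))).
  rewrite -expnS; apply: leq_pexp2l; first by apply: leq_trans n2.
  rewrite -divn2; lia.
have H := T_lower R n N N0.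
have hR : 2 * (\sum_(j < N./2.+1) n ^ j)%N%:R <= (n ^ N)%:R :> R.
  by rewrite -natrM ler_nat.
lra.
Qed.
Lemma ratio_eq (R : realFieldType) (x b w P Q : R) (e : nat) :
  w != 0 -> b != 0 -> P != 0 -> Q != 0 ->
  (x ^+ e / ((P * Q) * w)) / (b ^+ e / (Q * w)) = P^-1 * (x / b) ^+ e.
Proof.
move=> w0 b0 P0 Q0; rewrite expr_div_n.
have be : b ^+ e != 0 by rewrite expf_neq0.
by field; rewrite ?be ?w0 ?P0 ?Q0.
Qed.

Theorem lemma2p3 (R : realFieldType) (p n m k s i : nat) :
  prime p -> (2 <= n)%N -> (2 <= k)%N -> ~~ (p %| k)%N ->
  (0 < s)%N -> (s <= i)%N -> (i <= m)%N ->
  coef_a R p n m k i / coef_a R p n m k (i - s)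
  <= (p%:R ^- s) *
     ((2 * (p ^ s)%:R) / ((p ^ (m - i) * k)%:R ^+ (p ^ s - 1))) ^+ (p ^ (i - s)).
Proof.
move=> pp n2 k2 _ s0 si im.
have p2 : (2 <= p)%N by apply: prime_gt1.
have p0 : (0 < p)%N by apply: prime_gt0.
set r := (p ^ (m - i) * k)%N.
set ps := (p ^ s)%N.
set e := (p ^ (i - s))%N.
have ps2 : (2 <= ps)%N.
  apply: leq_trans p2 _; rewrite /ps -{1}(expn1 p); exact: leq_pexp2l.
have r2 : (2 <= r)%N by apply: leq_trans k2 _; rewrite /r leq_pmull // expn_gt0 p0.
have hN : (p ^ (m - (i - s)) * k = ps * r)%N.
  by rewrite /ps /r mulnA -expnD; congr (p ^ _ * k)%N; lia.
have hi : (p ^ i = ps * e)%N by rewrite /ps /e -expnD; congr (p ^ _)%N; lia.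
have N4 : (4 <= ps * r)%N by apply: (leq_trans (leq_mul ps2 r2)).
have M2 : (2 <= p ^ m * k)%N by apply: leq_trans k2 _; rewrite leq_pmull // expn_gt0 p0.
rewrite /coef_a hN hi exprM natrM ratio_eq; last first.
- by rewrite pnatr_eq0 -lt0n /e expn_gt0 p0.
- by rewrite pnatr_eq0 -lt0n /ps expn_gt0 p0.
- rewrite /necklace_w mulf_neq0 ?invr_eq0 ?pnatr_eq0 -?lt0n; first by [].
    by apply: leq_trans N4.
  exact: (lt0r_neq0 (T_pos R n (ps * r) n2 (leq_trans (isT : (2 <= 4)%N) N4))).
- rewrite /necklace_w mulf_neq0 ?invr_eq0 ?pnatr_eq0 -?lt0n; first by [].
    by apply: leq_trans M2.
  exact: (lt0r_neq0 (T_pos R n _ n2 M2)).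
rewrite -natrX; apply: ler_wpM2l; first by rewrite invr_ge0 ler0n.
have N0 : (0 < ps * r)%N by apply: leq_trans N4.
have r0 : (0 < r)%N by apply: leq_trans r2.
have tpos := T_pos R n r n2 r2.
have tup := T_upper R n r n2 r2.
have upos := T_pos R n (ps * r) n2 (leq_trans (isT : (2 <= 4)%N) N4).
have ulow := T_lower4 R n (ps * r) n2 N4.
rewrite -/r.
have -> : necklace_w R n r = r%:R^-1 * Tsum R n r by [].
have -> : necklace_w R n (ps * r) = (ps * r)%:R^-1 * Tsum R n (ps * r) by [].
set t := Tsum R n r; set u := Tsum R n (ps * r).
have rR : 0 < r%:R :> R by rewrite ltr0n.
have psR : 0 < ps%:R :> R by rewrite ltr0n; apply: leq_trans ps2.
have hX : 0 <= (r%:R^-1 * t) ^+ ps by rewrite exprn_ge0 // mulr_ge0 ?invr_ge0 ?ltW.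
have Bpos : 0 < (ps * r)%:R^-1 * u by rewrite mulr_gt0 // invr_gt0 ltr0n.
apply: lerXn2r; rewrite ?nnegrE.
- by rewrite divr_ge0 // ltW.
- by rewrite divr_ge0 ?exprn_ge0 ?ler0n // mulr_ge0 // ler0n.
rewrite ler_pdivrMr //.
have step1 : (r%:R^-1 * t) ^+ ps <= (r%:R^-1 * (n ^ r)%:R) ^+ ps.
  apply: lerXn2r; rewrite ?nnegrE.
  - by rewrite mulr_ge0 ?invr_ge0 ?ler0n // ltW.
  - by rewrite mulr_ge0 ?invr_ge0 ?ler0n.
  by rewrite ler_pM2l // invr_gt0.
apply: (le_trans step1).
have hz : r%:R ^+ ps = r%:R ^+ (ps - 1) * r%:R :> R.
  by rewrite -exprSr subn1 prednK //; apply: leq_trans ps2.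
have hn : ((n ^ r)%:R) ^+ ps = (n ^ (ps * r))%:R :> R by rewrite -natrX -expnM mulnC.
rewrite exprMn exprVn hz hn natrM.
have z0 : 0 < r%:R ^+ (ps - 1) :> R by rewrite exprn_gt0.
set z := r%:R ^+ (ps - 1) in z0 *.
set a := (n ^ (ps * r))%:R in ulow *.
set P := ps%:R in psR *. set rr := r%:R in rR *.
have -> : 2 * P / z * ((P * rr)^-1 * u) = (2 * u) / (z * rr).
  by field; rewrite ?lt0r_neq0.
by rewrite mulrC ler_pM2r // invr_gt0 mulr_gt0.
Qed.
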